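(* The diameter of the swap graph $\mathcal{G}_n$ is $\Omega\!\left(\frac{n}{\ln n}\right)$ as $n\to\infty$.
   Context: Sequences are finite sequences of pairwise distinct integers indexed from $1$. The Cartesian tree $C(x)$ of a sequence $x$ of length $n$ is empty if $n=0$; otherwise, if $x[i]$ is the minimum of $x$, it is the binary tree with root $i$, left subtree $C(x[1\ldots i-1])$ and right subtree $C(x[i+1\ldots n])$. $x\approx_{CT}y$ means $C(x)=C(y)$. For $1\le i\le n-1$, $\tau(x,i)$ is obtained from $x$ by exchanging $x[i]$ and $x[i+1]$. For sequences $x,y$ of length $n$, $x\overset{\tau}{\approx}_{CT}y$ means $x\approx_{CT}y$, or there is $i\in\{1,\ldots,n-1\}$ with $\tau(x,i)\approx_{CT}y$ or $\tau(y,i)\approx_{CT}x$. The swap graph $\mathcal{G}_n$ has as vertex set the set $\mathcal{C}_n$ of Cartesian trees with $n$ nodes (i.e. all binary trees with $n$ nodes), with an edge $\{C(x),C(y)\}$ whenever $x\overset{\tau}{\approx}_{CT}y$ (and $C(x)\neq C(y)$). *)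

(* Defs.v *)
From Stdlib Require Import ZArith List Reals.
Import ListNotations.

(* Unlabelled binary trees. The Cartesian tree of a sequence has its nodes
   labelled by indices, but those labels are exactly the in-order positions,
   so the shape determines the labelled tree. *)
Inductive btree : Type := Leaf | Node (l r : btree).

Fixpoint bsize (t : btree) : nat :=
  match t with Leaf => 0 | Node l r => S (bsize l + bsize r) end.

Fixpoint index_of (a : Z) (l : list Z) : nat :=
  match l with
  | [] => 0
  | b :: l' => if Z.eqb a b then 0 else S (index_of a l')
  end.

(* Cartesian tree, computed with fuel (fuel = length suffices). *)
Fixpoint ct_fuel (k : nat) (x : list Z) : btree :=
  match k with
  | O => Leaf
  | S k' =>
      match x with
      | [] => Leaf
      | h :: t =>
          let i := index_of (fold_left Z.min t h) x in
          Node (ct_fuel k' (firstn i x)) (ct_fuel k' (skipn (S i) x))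
      end
  end.

Definition cartesian (x : list Z) : btree := ct_fuel (length x) x.

Definition ct_equiv (x y : list Z) : Prop := cartesian x = cartesian y.

(* tau(x, i): exchange x[i] and x[i+1] (1-indexed), for 1 <= i <= n-1 *)
Definition tau (x : list Z) (i : nat) : list Z :=
  firstn (i - 1) x ++ nth i x 0%Z :: nth (i - 1) x 0%Z :: skipn (i + 1) x.

Definition swap_equiv (n : nat) (x y : list Z) : Prop :=
  ct_equiv x y \/
  exists i, (1 <= i <= n - 1)%nat /\ (ct_equiv (tau x i) y \/ ct_equiv (tau y i) x).

Definition valid_seq (n : nat) (x : list Z) : Prop := length x = n /\ NoDup x.

Definition swap_edge (n : nat) (t1 t2 : btree) : Prop :=
  t1 <> t2 /\
  exists x y, valid_seq n x /\ valid_seq n y /\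
    cartesian x = t1 /\ cartesian y = t2 /\ swap_equiv n x y.

Inductive walk (n : nat) : nat -> btree -> btree -> Prop :=
| walk0 t : walk n 0 t t
| walkS m t1 t2 t3 : swap_edge n t1 t2 -> walk n m t2 t3 -> walk n (S m) t1 t3.

(* diam(G_n) >= k : some two vertices (binary trees with n nodes) are at
   graph distance >= k (distance = +infinity if not connected). *)
Definition diam_ge (n : nat) (k : R) : Prop :=
  exists t1 t2, bsize t1 = n /\ bsize t2 = n /\
    forall m, walk n m t1 t2 -> (k <= INR m)%R.

(* Main.v *)
Require Import Defs.
From Stdlib Require Import Reals.
From Stdlib Require Import ZArith List Lia Permutation Lra Classical.
Import ListNotations.
Open Scope bool_scope.


Fixpoint nlf (f : nat -> Z) (v : Z) (k : nat) : option nat :=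
  match k with
  | O => None
  | S k' => if (f k' <? v)%Z then Some k' else nlf f v k'
  end.

Definition ps (f : nat -> Z) (k : nat) := nlf f (f k) k.
Definition fof (x : list Z) := fun q => nth q x 0%Z.
Definition psv (x : list Z) := map (ps (fof x)) (seq 0 (length x)).

Definition shiftopt (a : nat) (o : option nat) :=
  match o with Some q => Some (S a + q) | None => Some a end.

Fixpoint tree_psv (t : btree) : list (option nat) :=
  match t with
  | Leaf => []
  | Node l r => tree_psv l ++ None :: map (shiftopt (bsize l)) (tree_psv r)
  end.

Lemma tree_psv_length t : length (tree_psv t) = bsize t.
Proof. induction t; simpl; auto. rewrite length_app; simpl; rewrite length_map; lia. Qed.

Lemma psv_length x : length (psv x) = length x.
Proof. unfold psv. rewrite length_map, length_seq. auto. Qed.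

Lemma nlf_ext f g v k : (forall q, q < k -> f q = g q) -> nlf f v k = nlf g v k.
Proof.
  induction k; simpl; intros H; auto.
  rewrite H by lia. rewrite IHk by (intros; apply H; lia). auto.
Qed.

Lemma nlf_some f v k p : nlf f v k = Some p ->
  p < k /\ (f p < v)%Z /\ forall q, p < q < k -> (v <= f q)%Z.
Proof.
  induction k; simpl; intros H; [discriminate|].
  destruct (Z.ltb_spec (f k) v).
  - inversion H; subst. split; [lia|split; auto]. intros; lia.
  - destruct (IHk H) as [A [B C]]. split; [lia|split; auto].
    intros q Hq. destruct (Nat.eq_dec q k); [subst; lia| apply C; lia].
Qed.

Lemma nlf_none f v k : nlf f v k = None -> forall q, q < k -> (v <= f q)%Z.
Proof.
  induction k; simpl; intros H q Hq; [lia|].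
  destruct (Z.ltb_spec (f k) v); [discriminate|].
  destruct (Nat.eq_dec q k); [subst; lia| apply IHk; auto; lia].
Qed.

Lemma nlf_none_intro f v k : (forall q, q < k -> (v <= f q)%Z) -> nlf f v k = None.
Proof.
  induction k; simpl; intros H; auto.
  destruct (Z.ltb_spec (f k) v). specialize (H k); lia.
  apply IHk. intros; apply H; lia.
Qed.

Lemma nlf_lt f v k p : nlf f v k = Some p -> p < k.
Proof. intros H; apply nlf_some in H; tauto. Qed.

Lemma nlf_add f v a r : nlf f v (a + r) =
  match nlf (fun q => f (a + q)) v r with Some q => Some (a + q) | None => nlf f v a end.
Proof.
  induction r; simpl.
  - rewrite Nat.add_0_r; auto.
  - rewrite Nat.add_succ_r. simpl. destruct (Z.ltb (f (a + r)) v); auto.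
Qed.

Lemma seq_shift0 s len : seq s len = map (Nat.add s) (seq 0 len).
Proof.
  revert s; induction len; intros s; simpl; auto.
  rewrite Nat.add_0_r. f_equal. rewrite IHlen. rewrite (IHlen 1). rewrite map_map.
  apply map_ext. intros; lia.
Qed.

Lemma psv_decomp L m R :
  (forall z, In z L -> (m < z)%Z) -> (forall z, In z R -> (m < z)%Z) ->
  psv (L ++ m :: R) = psv L ++ None :: map (shiftopt (length L)) (psv R).
Proof.
  intros HL HR. unfold psv. rewrite length_app. simpl.
  rewrite seq_app, map_app. f_equal.
  - apply map_ext_in. intros k Hk. apply in_seq in Hk.
    unfold ps, fof. rewrite app_nth1 by lia. apply nlf_ext. intros q Hq.
    rewrite app_nth1 by lia. auto.
  - simpl. f_equal.
    + unfold ps, fof. rewrite app_nth2 by lia. rewrite Nat.sub_diag. simpl.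
      apply nlf_none_intro. intros q Hq. rewrite app_nth1 by lia.
      apply Z.lt_le_incl, HL, nth_In; auto.
    + rewrite seq_shift0, !map_map. apply map_ext_in. intros r Hr. apply in_seq in Hr.
      unfold ps, fof. cbv beta.
      replace (nth (S (length L) + r) (L ++ m :: R) 0%Z) with (nth r R 0%Z)
        by (rewrite app_nth2 by lia; replace (S (length L) + r - length L) with (S r) by lia; auto).
      rewrite nlf_add.
      rewrite (nlf_ext (fun q => nth (S (length L) + q) (L ++ m :: R) 0%Z) (fun q => nth q R 0%Z)).
      * destruct (nlf (fun q => nth q R 0%Z) (nth r R 0%Z) r); [reflexivity|].
        cbn [nlf shiftopt].
        rewrite app_nth2 by lia. rewrite Nat.sub_diag. cbn [nth].
        assert (Hm : (m < nth r R 0)%Z) by (apply HR, nth_In; lia).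
        destruct (Z.ltb_spec m (nth r R 0%Z)); auto; lia.
      * intros q Hq. rewrite app_nth2 by lia.
        replace (S (length L) + q - length L) with (S q) by lia. auto.
Qed.

Lemma fold_min_le t h : (fold_left Z.min t h <= h)%Z /\ forall z, In z t -> (fold_left Z.min t h <= z)%Z.
Proof.
  revert h; induction t as [|a t IH]; intros h; simpl.
  - split; [lia| tauto].
  - destruct (IH (Z.min h a)) as [A B]. split; [lia|].
    intros z [<-|Hz]; [lia| auto].
Qed.

Lemma fold_min_in t h : In (fold_left Z.min t h) (h :: t).
Proof.
  revert h; induction t as [|a t IH]; intros h; simpl; [auto|].
  destruct (IH (Z.min h a)) as [E|E].
  - destruct (Z.min_spec h a) as [[_ E2]|[_ E2]]; rewrite E2 in *; auto.
  - simpl; auto.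
Qed.

Lemma index_of_spec a l : In a l -> index_of a l < length l /\ nth (index_of a l) l 0%Z = a.
Proof.
  induction l as [|b l IH]; simpl; [tauto|]. intros H.
  destruct (Z.eqb_spec a b). subst; split; auto; lia.
  destruct H as [H|H]; [congruence|]. destruct (IH H); split; auto; lia.
Qed.

Lemma skipn_nth_cons (l : list Z) i : i < length l -> skipn i l = nth i l 0%Z :: skipn (S i) l.
Proof.
  revert i; induction l; intros i Hi; simpl in *. lia.
  destruct i; simpl; auto. apply IHl; lia.
Qed.

Lemma tree_psv_node l r : tree_psv (Node l r) = tree_psv l ++ None :: map (shiftopt (bsize l)) (tree_psv r).
Proof. reflexivity. Qed.

Lemma ct_psv k x : NoDup x -> length x <= k -> tree_psv (ct_fuel k x) = psv x.
Proof.
  revert x; induction k; intros x Hnd Hl.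
  - destruct x; simpl in *; [auto|lia].
  - destruct x as [|h t]; [reflexivity|].
    set (m := fold_left Z.min t h).
    set (i := index_of m (h :: t)).
    assert (Hin := fold_min_in t h). fold m in Hin.
    destruct (index_of_spec _ _ Hin) as [Hi Hn]. fold i in Hi, Hn.
    assert (Hle : forall z, In z (h :: t) -> (m <= z)%Z).
    { destruct (fold_min_le t h). intros z [<-|Hz]; auto. }
    set (x := h :: t) in *.
    assert (Hx : x = firstn i x ++ m :: skipn (S i) x).
    { rewrite <- (firstn_skipn i x) at 1. f_equal.
      rewrite skipn_nth_cons by auto. rewrite Hn. auto. }
    assert (HL : length (firstn i x) = i) by (apply firstn_length_le; lia).
    assert (HR : length (skipn (S i) x) = length x - S i) by apply length_skipn.
    assert (Hnd2 := Hnd). rewrite Hx in Hnd2.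
    assert (Hnin := NoDup_remove_2 _ _ _ Hnd2).
    assert (Hnd3 := NoDup_remove_1 _ _ _ Hnd2).
    assert (E1 : tree_psv (ct_fuel k (firstn i x)) = psv (firstn i x)).
    { apply IHk. apply NoDup_app_remove_r in Hnd3; auto.
      lia. }
    assert (E2 : tree_psv (ct_fuel k (skipn (S i) x)) = psv (skipn (S i) x)).
    { apply IHk. apply NoDup_app_remove_l in Hnd3; auto.
      lia. }
    assert (Hct : ct_fuel (S k) x = Node (ct_fuel k (firstn i x)) (ct_fuel k (skipn (S i) x))) by reflexivity.
    rewrite Hct, tree_psv_node, E1, E2.
    assert (Hb : bsize (ct_fuel k (firstn i x)) = length (firstn i x)).
    { rewrite <- tree_psv_length, E1, psv_length. auto. }
    rewrite Hb.
    rewrite <- (psv_decomp _ m); [rewrite <- Hx; reflexivity| |].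
    + intros z Hz. assert (z <> m) by (intro; subst; apply Hnin, in_or_app; auto).
      assert (m <= z)%Z; [|lia]. apply Hle. rewrite Hx. apply in_or_app; auto.
    + intros z Hz. assert (z <> m) by (intro; subst; apply Hnin, in_or_app; auto).
      assert (m <= z)%Z; [|lia]. apply Hle. rewrite Hx. apply in_or_app; simpl; auto.
Qed.

Lemma cart_psv x : NoDup x -> tree_psv (cartesian x) = psv x.
Proof. intros; apply ct_psv; auto. Qed.

Definition sw (f : nat -> Z) j q :=
  if q =? j then f (S j) else if q =? S j then f j else f q.

Lemma sw_j f j : sw f j j = f (S j).
Proof. unfold sw. rewrite Nat.eqb_refl. auto. Qed.
Lemma sw_Sj f j : sw f j (S j) = f j.
Proof. unfold sw. destruct (Nat.eqb_spec (S j) j); [lia|]. rewrite Nat.eqb_refl. auto. Qed.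
Lemma sw_o f j q : q <> j -> q <> S j -> sw f j q = f q.
Proof. intros. unfold sw. destruct (Nat.eqb_spec q j); [lia|]. destruct (Nat.eqb_spec q (S j)); [lia|]. auto. Qed.

Lemma tau_decomp (x : list Z) j : S j < length x ->
  x = firstn j x ++ nth j x 0%Z :: nth (S j) x 0%Z :: skipn (S j + 1) x /\
  tau x (S j) = firstn j x ++ nth (S j) x 0%Z :: nth j x 0%Z :: skipn (S j + 1) x.
Proof.
  intros H. split.
  - rewrite <- (firstn_skipn j x) at 1. f_equal.
    rewrite skipn_nth_cons by lia. f_equal. rewrite skipn_nth_cons by lia.
    f_equal. f_equal. lia.
  - unfold tau. replace (S j - 1) with j by lia. auto.
Qed.

Lemma tau_length x j : S j < length x -> length (tau x (S j)) = length x.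
Proof.
  intros H. destruct (tau_decomp x j H) as [E1 E2]. rewrite E2. rewrite E1 at 5.
  rewrite !length_app. simpl. auto.
Qed.

Lemma tau_perm x j : S j < length x -> Permutation x (tau x (S j)).
Proof.
  intros H. destruct (tau_decomp x j H) as [E1 E2]. rewrite E2. rewrite E1 at 1.
  apply Permutation_app_head. apply perm_swap.
Qed.

Lemma tau_nth x j q : S j < length x -> nth q (tau x (S j)) 0%Z = sw (fof x) j q.
Proof.
  intros H. destruct (tau_decomp x j H) as [E1 E2]. rewrite E2. unfold sw, fof.
  assert (HL : length (firstn j x) = j) by (apply firstn_length_le; lia).
  destruct (Nat.ltb_spec q j).
  - rewrite app_nth1 by lia. rewrite nth_firstn.
    replace (q =? j) with false by (symmetry; apply Nat.eqb_neq; lia).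
    replace (q =? S j) with false by (symmetry; apply Nat.eqb_neq; lia).
    destruct (Nat.ltb_spec q j); auto; lia.
  - rewrite app_nth2 by lia. rewrite HL.
    destruct (Nat.eqb_spec q j).
    + subst. rewrite Nat.sub_diag. auto.
    + destruct (Nat.eqb_spec q (S j)).
      * subst. replace (S j - j) with 1 by lia. auto.
      * replace (q - j) with (S (S (q - S (S j)))) by lia. cbn [nth].
        rewrite nth_skipn. f_equal. lia.
Qed.

Lemma tau_tau x j : S j < length x -> tau (tau x (S j)) (S j) = x.
Proof.
  intros H. assert (H2 : S j < length (tau x (S j))) by (rewrite tau_length; auto).
  apply (nth_ext _ _ 0%Z 0%Z).
  - rewrite !tau_length; auto.
  - intros q Hq. rewrite tau_nth by auto.
    destruct (Nat.eq_dec q j); [subst; rewrite sw_j|].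
    + unfold fof. rewrite tau_nth, sw_Sj by auto. auto.
    + destruct (Nat.eq_dec q (S j)); [subst; rewrite sw_Sj|].
      * unfold fof. rewrite tau_nth, sw_j by auto. auto.
      * rewrite sw_o by auto. unfold fof. rewrite tau_nth, sw_o by auto. auto.
Qed.

Definition Gk (p : list (option nat)) j (c : option nat) (fl : bool) th k : option nat :=
  if k <? j then nth k p None
  else if k =? j then c
  else if k =? S j then (if fl then nth j p None else Some j)
  else match nth k p None with
       | Some q => if q =? j then Some (S j)
                   else if q =? S j then (if fl then Some (S j) else if k <? th then Some (S j) else Some j)
                   else Some q
       | None => None
       end.

Definition G n p j c fl th := map (Gk p j c fl th) (seq 0 n).

Definition Cand n p :=
  flat_map (fun j => flat_map (fun c => flat_map (fun fl =>
     map (fun th => G n p j c fl th) (seq 0 (S n))) [true; false])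
     (None :: map Some (seq 0 n))) (seq 0 (n - 1)).

Lemma Gk_lt p j c fl th k : k < j -> Gk p j c fl th k = nth k p None.
Proof. intros. unfold Gk. destruct (Nat.ltb_spec k j); auto; lia. Qed.
Lemma Gk_j p j c fl th : Gk p j c fl th j = c.
Proof. unfold Gk. rewrite Nat.ltb_irrefl, Nat.eqb_refl. auto. Qed.
Lemma Gk_Sj p j c fl th : Gk p j c fl th (S j) = if fl then nth j p None else Some j.
Proof. unfold Gk. destruct (Nat.ltb_spec (S j) j); [lia|]. destruct (Nat.eqb_spec (S j) j); [lia|].
  rewrite Nat.eqb_refl. auto. Qed.
Lemma Gk_gt p j c fl th k : S j < k -> Gk p j c fl th k =
  match nth k p None with
       | Some q => if q =? j then Some (S j)
                   else if q =? S j then (if fl then Some (S j) else if k <? th then Some (S j) else Some j)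
                   else Some q
       | None => None
       end.
Proof. intros. unfold Gk. destruct (Nat.ltb_spec k j); [lia|]. destruct (Nat.eqb_spec k j); [lia|].
  destruct (Nat.eqb_spec k (S j)); [lia|]. auto. Qed.

Lemma nth_psv x k : k < length x -> nth k (psv x) None = ps (fof x) k.
Proof.
  intros H. unfold psv. rewrite (nth_indep _ None (ps (fof x) 0)) by (rewrite length_map, length_seq; auto).
  rewrite map_nth, seq_nth; auto.
Qed.

Lemma find_first (Q : nat -> bool) n : exists th, th <= n /\ (forall k, k < th -> Q k = false) /\ (th < n -> Q th = true).
Proof.
  induction n.
  - exists 0. split; [lia|split; intros; lia].
  - destruct IHn as [th [H1 [H2 H3]]].
    destruct (Nat.eq_dec th n).
    + subst. destruct (Q n) eqn:E.
      * exists n. split; [lia|split; auto].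
      * exists (S n). split; [lia|split; [|lia]]. intros k Hk.
        destruct (Nat.eq_dec k n); subst; auto. apply H2; lia.
    + exists th. split; [lia|split; auto]. intros; apply H3; lia.
Qed.

Lemma swap_psv x n j : NoDup x -> length x = n -> S j < n ->
  exists c fl th, (c = None \/ exists q, c = Some q /\ q < n) /\ th <= n /\
    psv (tau x (S j)) = G n (psv x) j c fl th.
Proof.
  intros Hnd Hlen Hj.
  set (f := fof x).
  assert (Hinj : forall q1 q2, q1 < n -> q2 < n -> f q1 = f q2 -> q1 = q2).
  { intros q1 q2 A1 A2 E. apply (proj1 (NoDup_nth x 0%Z) Hnd); subst n; auto. }
  set (a := f j). set (b := f (S j)).
  set (Q := fun k => match ps f k with Some q => (q =? S j) && (S j <? k) && (f k <? a)%Z | None => false end).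
  destruct (find_first Q n) as [th [Th1 [Th2 Th3]]].
  exists (nlf f b j), (a <? b)%Z, th.
  split.
  { destruct (nlf f b j) eqn:E; auto. right. exists n0; split; auto. apply nlf_lt in E. lia. }
  split; auto.
  unfold G. unfold psv at 1. rewrite tau_length by lia. rewrite Hlen.
  apply map_ext_in. intros k Hk. apply in_seq in Hk.
  assert (Hps : ps (fof (tau x (S j))) k = nlf (sw f j) (sw f j k) k).
  { unfold ps. rewrite (nlf_ext _ (sw f j)).
    - unfold fof at 1. rewrite tau_nth by lia. auto.
    - intros q _. unfold fof. rewrite tau_nth by lia. auto. }
  rewrite Hps. clear Hps.
  assert (Hp : forall k, k < n -> nth k (psv x) None = ps f k) by (intros; apply nth_psv; lia).
  destruct (Nat.lt_ge_cases k j) as [Hkj|Hkj].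
  - rewrite Gk_lt, Hp by lia. rewrite sw_o by lia. unfold ps. apply nlf_ext.
    intros; apply sw_o; lia.
  - destruct (Nat.eq_dec k j) as [->|Hkj2].
    + rewrite Gk_j, sw_j. apply nlf_ext. intros; apply sw_o; lia.
    + destruct (Nat.eq_dec k (S j)) as [->|Hkj3].
      * rewrite Gk_Sj, sw_Sj. cbn [nlf]. rewrite sw_j.
        fold a b. rewrite Hp by lia.
        rewrite (nlf_ext (sw f j) f) by (intros; apply sw_o; lia).
        destruct (Z.ltb_spec a b).
        -- destruct (Z.ltb_spec b a); [lia|]. auto.
        -- destruct (Z.ltb_spec b a); auto.
           assert (a = b) by lia. exfalso. assert (j = S j) by (apply Hinj; auto; lia). lia.
      * rewrite Gk_gt by lia. rewrite Hp by lia. rewrite sw_o by lia.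
        set (v := f k).
        unfold ps. fold v.
        replace k with (S (S j) + (k - S (S j))) at 1 2 by lia.
        rewrite !nlf_add.
        rewrite (nlf_ext (fun q => sw f j (S (S j) + q)) (fun q => f (S (S j) + q))) by (intros; apply sw_o; lia).
        replace (S (S j) + (k - S (S j))) with k by lia.
        destruct (nlf (fun q => f (S (S j) + q)) v (k - S (S j))) as [q|] eqn:Ein.
        -- destruct (Nat.eqb_spec (S (S j) + q) j); [lia|].
           destruct (Nat.eqb_spec (S (S j) + q) (S j)); [lia|]. auto.
        -- cbn [nlf]. rewrite sw_Sj, sw_j.
           rewrite (nlf_ext (sw f j) f) by (intros; apply sw_o; lia).
           fold a b.
           destruct (Z.ltb_spec b v).
           ++ rewrite Nat.eqb_refl. destruct (Nat.eqb_spec (S j) j); [lia|].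
              destruct (Z.ltb_spec a b).
              ** destruct (Z.ltb_spec a v); auto; lia.
              ** destruct (Nat.ltb_spec k th).
                 --- assert (Qk : Q k = false) by (apply Th2; auto).
                     unfold Q in Qk.
                     assert (Hpk : ps f k = Some (S j)).
                     { unfold ps. fold v. replace k with (S (S j) + (k - S (S j))) by lia.
                       rewrite nlf_add, Ein. cbn [nlf]. fold a b.
                       destruct (Z.ltb_spec b v); auto; lia. }
                     rewrite Hpk, Nat.eqb_refl in Qk.
                     destruct (Nat.ltb_spec (S j) k); [|lia]. simpl in Qk.
                     fold v in Qk. destruct (Z.ltb_spec v a); [discriminate|].
                     destruct (Z.ltb_spec a v); auto.
                     assert (a = v) by lia. assert (j = k) by (apply Hinj; auto; lia). lia.
                 --- assert (Qt : Q th = true) by (apply Th3; lia).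
                     unfold Q in Qt.
                     destruct (ps f th) as [q|] eqn:Et; [|discriminate].
                     destruct (Nat.eqb_spec q (S j)); [|discriminate]. subst q.
                     destruct (Nat.ltb_spec (S j) th); [|discriminate]. simpl in Qt.
                     destruct (Z.ltb_spec (f th) a); [|discriminate].
                     destruct (Z.ltb_spec a v); auto.
                     exfalso.
                     destruct (Nat.eq_dec th k); [subst th; unfold v in *; lia|].
                     (* ps f k = Some (S j) gives v <= f th *)
                     assert (Hpk : nlf f v k = Some (S j)).
                     { replace k with (S (S j) + (k - S (S j))) by lia.
                       rewrite nlf_add, Ein. cbn [nlf]. fold a b.
                       destruct (Z.ltb_spec b v); auto; lia. }
                     apply nlf_some in Hpk. destruct Hpk as [_ [_ Hall]].
                     specialize (Hall th). lia.
           ++ destruct (Z.ltb_spec a v).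
              ** rewrite Nat.eqb_refl. auto.
              ** destruct (nlf f v j) as [q|] eqn:Ej; auto.
                 apply nlf_lt in Ej.
                 destruct (Nat.eqb_spec q j); [lia|]. destruct (Nat.eqb_spec q (S j)); [lia|]. auto.
Qed.

Lemma cand_in x n i : NoDup x -> length x = n -> 1 <= i <= n - 1 ->
  In (psv (tau x i)) (Cand n (psv x)).
Proof.
  intros Hnd Hl Hi. destruct i as [|j]; [lia|].
  destruct (swap_psv x n j Hnd Hl ltac:(lia)) as [c [fl [th [Hc [Hth E]]]]].
  rewrite E. unfold Cand. apply in_flat_map. exists j. split; [apply in_seq; lia|].
  apply in_flat_map. exists c. split.
  { destruct Hc as [->|[q [-> Hq]]]; [left; auto| right; apply in_map, in_seq; lia]. }
  apply in_flat_map. exists fl. split; [destruct fl; simpl; auto|].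
  apply in_map, in_seq. lia.
Qed.

Lemma tau_valid n x i : valid_seq n x -> 1 <= i <= n - 1 -> valid_seq n (tau x i).
Proof.
  intros [Hl Hnd] Hi. destruct i as [|j]; [lia|]. split.
  - rewrite tau_length; lia.
  - apply (Permutation_NoDup (tau_perm x j ltac:(lia))); auto.
Qed.

Lemma edge_cand n t1 t2 : swap_edge n t1 t2 -> In (tree_psv t2) (Cand n (tree_psv t1)).
Proof.
  intros [Hne [x [y [Vx [Vy [Cx [Cy Hs]]]]]]].
  destruct Hs as [Heq | [i [Hi [H | H]]]].
  - unfold ct_equiv in Heq. congruence.
  - unfold ct_equiv in H. subst.
    assert (Vw := tau_valid n x i Vx Hi).
    rewrite <- H. rewrite (cart_psv (tau x i)) by apply Vw. rewrite (cart_psv x) by apply Vx.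
    apply cand_in; try apply Vx; auto.
  - unfold ct_equiv in H. subst.
    destruct i as [|j]; [lia|].
    assert (Vw := tau_valid n y (S j) Vy Hi).
    rewrite <- H. rewrite (cart_psv (tau y (S j))) by apply Vw. rewrite (cart_psv y) by apply Vy.
    rewrite <- (tau_tau y j) at 1 by (destruct Vy; lia).
    apply cand_in; try apply Vw; auto.
Qed.

Fixpoint Ball n d p := match d with 0 => [p] | S d => p :: flat_map (Ball n d) (Cand n p) end.

Lemma walk_ball n m t1 t2 : walk n m t1 t2 -> forall d, m <= d -> In (tree_psv t2) (Ball n d (tree_psv t1)).
Proof.
  induction 1; intros d Hd.
  - destruct d; simpl; auto.
  - destruct d as [|d]; [lia|]. simpl. right. apply in_flat_map.
    exists (tree_psv t2). split; [apply edge_cand; auto| apply IHwalk; lia].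
Qed.

Lemma flat_map_len_le {A B} (f : A -> list B) l c : (forall a, length (f a) <= c) -> length (flat_map f l) <= length l * c.
Proof.
  intros H. induction l; simpl; auto. rewrite length_app. specialize (H a). lia.
Qed.

Lemma cand_len n p : length (Cand n p) <= (n - 1) * ((S n) * (2 * S n)).
Proof.
  unfold Cand. eapply Nat.le_trans; [apply (flat_map_len_le _ _ (S n * (2 * S n)))|].
  2:{ rewrite length_seq. apply le_n. }
  intros j. eapply Nat.le_trans; [apply (flat_map_len_le _ _ (2 * S n))|].
  2:{ cbn [length]. rewrite length_map, length_seq. lia. }
  intros c. eapply Nat.le_trans; [apply (flat_map_len_le _ _ (S n))|].
  2:{ cbn [length]. lia. }
  intros fl. rewrite length_map, length_seq. lia.
Qed.

Lemma ball_len n d p : length (Ball n d p) <= (S n) ^ (4 * d).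
Proof.
  revert p; induction d; intros p; [simpl; auto|]. cbn [Ball length].
  eapply Nat.le_trans. apply le_n_S. apply flat_map_len_le. apply IHd.
  assert (Hc := cand_len n p).
  replace (4 * S d) with (4 + 4 * d) by lia. rewrite Nat.pow_add_r.
  assert (1 <= S n ^ (4 * d)) by (apply Nat.neq_0_lt_0, Nat.pow_nonzero; lia).
  set (M := S n ^ (4 * d)) in *.
  assert (length (Cand n p) * M <= (n - 1) * (S n * (2 * S n)) * M) by (apply Nat.mul_le_mono_r; auto).
  assert ((n - 1) * (S n * (2 * S n)) + 1 <= S n ^ 4).
  { simpl. destruct n; simpl; nia. }
  set (K := (n - 1) * (S n * (2 * S n))) in *. set (P4 := S n ^ 4) in *.
  assert ((K + 1) * M <= P4 * M) by (apply Nat.mul_le_mono_r; auto).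
  nia.
Qed.

Fixpoint paths k : list btree := match k with
  | 0 => [Node Leaf Leaf]
  | S k => map (fun t => Node t Leaf) (paths k) ++ map (fun t => Node Leaf t) (paths k) end.

Lemma paths_size k t : In t (paths k) -> bsize t = S k.
Proof.
  revert t; induction k; simpl; intros t H.
  - destruct H as [<-|[]]; auto.
  - apply in_app_or in H. destruct H as [H|H]; apply in_map_iff in H; destruct H as [t' [<- H]];
    simpl; rewrite (IHk t' H); lia.
Qed.

Lemma paths_len k : length (paths k) = 2 ^ k.
Proof. induction k; simpl; auto. rewrite length_app, !length_map. lia. Qed.

Lemma map_inj {A B} (f : A -> B) : (forall a b, f a = f b -> a = b) ->
  forall l1 l2, map f l1 = map f l2 -> l1 = l2.
Proof.
  intros H l1; induction l1; intros [|b l2] E; simpl in *; try discriminate; auto.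
  injection E; intros. f_equal; auto.
Qed.

Lemma paths_nodup k : NoDup (map tree_psv (paths k)).
Proof.
  induction k; simpl.
  - constructor; [simpl; auto| constructor].
  - rewrite map_app, !map_map.
    assert (E1 : map (fun t => tree_psv (Node t Leaf)) (paths k) = map (fun q => q ++ [None]) (map tree_psv (paths k))).
    { rewrite map_map. apply map_ext. intros t. rewrite tree_psv_node. reflexivity. }
    assert (E2 : map (fun t => tree_psv (Node Leaf t)) (paths k) = map (fun q => None :: map (shiftopt 0) q) (map tree_psv (paths k))).
    { rewrite map_map. apply map_ext. intros t. rewrite tree_psv_node. reflexivity. }
    rewrite E1, E2. apply NoDup_app.
    + apply FinFun.Injective_map_NoDup; auto. intros a b E. apply app_inv_tail in E; auto.
    + apply FinFun.Injective_map_NoDup; auto. intros a b E. injection E; intros E'.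
      apply (map_inj (shiftopt 0)) in E'; auto.
      intros [u|] [w|]; simpl; intros H; inversion H; auto; lia.
    + intros l H1 H2. apply in_map_iff in H1. destruct H1 as [q [<- H1]].
      apply in_map_iff in H2. destruct H2 as [q' [E H2]].
      apply in_map_iff in H1. destruct H1 as [t [<- Ht]].
      assert (Hs := paths_size _ _ Ht).
      assert (Hlen := tree_psv_length t). rewrite Hs in Hlen.
      destruct (tree_psv t) as [|o q0]; [simpl in Hlen; lia|].
      simpl in E. injection E; intros E3 _.
      assert (In None (map (shiftopt 0) q')) by (rewrite E3; apply in_or_app; simpl; auto).
      apply in_map_iff in H. destruct H as [[u|] [H _]]; discriminate.
Qed.

Lemma pow_bound l : 6 <= l -> 6 * l + 10 <= 2 ^ l.
Proof.
  induction 1; simpl; lia.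
Qed.

Theorem lemma11 :
  exists c : R, (0 < c)%R /\
  exists N : nat, forall n : nat, (N <= n)%nat ->
    diam_ge n (c * (INR n / ln (INR n)))%R.
Proof.
  exists (1/24)%R. split; [lra|]. exists 64. intros n Hn.
  set (l := Nat.log2 n).
  assert (Hl6 : 6 <= l) by (change 6 with (Nat.log2 64); apply Nat.log2_le_mono; auto).
  destruct (Nat.log2_spec n ltac:(lia)) as [Hl1 Hl2]. fold l in Hl1, Hl2.
  set (q := n / (12 * l)).
  assert (Hq1 : 12 * l * q <= n) by (apply Nat.Div0.mul_div_le).
  assert (Hq2 : n < 12 * l * (q + 1)).
  { assert (H := Nat.div_mod n (12 * l) ltac:(lia)). assert (H2 := Nat.mod_upper_bound n (12 * l) ltac:(lia)).
    fold q in H. lia. }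
  destruct (paths (n - 1)) as [|t1 rest] eqn:Ep.
  { assert (H := paths_len (n - 1)). rewrite Ep in H. simpl in H.
    assert (H' := Nat.pow_nonzero 2 (n - 1)). lia. }
  assert (Ht1 : bsize t1 = n).
  { rewrite (paths_size (n - 1) t1) by (rewrite Ep; simpl; auto). lia. }
  set (Bl := Ball n q (tree_psv t1)).
  assert (Hex : exists t2, In t2 (paths (n - 1)) /\ ~ In (tree_psv t2) Bl).
  { apply NNPP. intros Hno.
    assert (Hinc : incl (map tree_psv (paths (n - 1))) Bl).
    { intros a Ha. apply in_map_iff in Ha. destruct Ha as [t2 [<- Ht2]].
      apply NNPP. intros Hn2. apply Hno. exists t2. auto. }
    assert (H1 := NoDup_incl_length (paths_nodup (n - 1)) Hinc).
    rewrite length_map, paths_len in H1.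
    assert (H2 := ball_len n q (tree_psv t1)). fold Bl in H2.
    assert (H3 : S n ^ (4 * q) <= 2 ^ (S l * (4 * q))).
    { rewrite (Nat.pow_mul_r 2). apply Nat.pow_le_mono_l. lia. }
    assert (H4 : 2 ^ (S l * (4 * q)) < 2 ^ (n - 1)).
    { apply Nat.pow_lt_mono_r; [lia|]. assert (q <= l * q) by nia. nia. }
    lia. }
  destruct Hex as [t2 [Ht2 Hn2]].
  exists t1, t2. split; auto. split; [rewrite (paths_size _ _ Ht2); lia|].
  intros m Hw.
  assert (Hm : q + 1 <= m).
  { destruct (Nat.le_gt_cases m q) as [H|H]; [|lia].
    exfalso. apply Hn2. apply (walk_ball n m t1 t2 Hw q H). }
  assert (Hnpos : (0 < INR n)%R) by (apply lt_0_INR; lia).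
  assert (HlnL : (INR l * ln 2 <= ln (INR n))%R).
  { rewrite <- ln_pow by lra.
    assert (E : (2 ^ l)%R = INR (2 ^ l)) by (rewrite pow_INR; simpl; f_equal; lra).
    rewrite E. destruct (proj1 (Nat.lt_eq_cases _ _) Hl1) as [H|H].
    - apply Rlt_le, ln_increasing. apply lt_0_INR. apply Nat.neq_0_lt_0, Nat.pow_nonzero; lia.
      apply lt_INR; auto.
    - rewrite H. lra. }
  assert (Hln2 := ln_lt_2).
  assert (HlR : (6 <= INR l)%R) by (replace 6%R with (INR 6) by (simpl; lra); apply le_INR; auto).
  assert (HL : (INR l / 2 <= ln (INR n))%R) by nra.
  assert (HLpos : (0 < ln (INR n))%R) by lra.
  assert (Hq2R : (INR n <= 12 * INR l * (INR q + 1))%R).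
  { replace (12 * INR l * (INR q + 1))%R with (INR (12 * l * (q + 1))) by (rewrite !mult_INR, plus_INR; simpl; lra).
    apply le_INR; lia. }
  assert (HmR : (INR q + 1 <= INR m)%R) by (replace (INR q + 1)%R with (INR (q + 1)) by (rewrite plus_INR; simpl; lra); apply le_INR; auto).
  set (L := ln (INR n)) in *.
  apply (Rmult_le_reg_r L); auto.
  replace (1 / 24 * (INR n / L) * L)%R with (INR n / 24)%R by (field; lra).
  assert (0 <= INR q)%R by apply pos_INR.
  assert (P1 : (0 <= (INR m - (INR q + 1)) * L)%R) by (apply Rmult_le_pos; lra).
  assert (P2 : (0 <= (INR q + 1) * (L - INR l / 2))%R) by (apply Rmult_le_pos; lra).
  nra.
Qed.
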